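(* Let $\mathscr{A}\in\mathbb{R}^{n\times n\times n_3}$, $\mathscr{V}\in\mathbb{R}^{n\times s\times n_3}$, and suppose $m$ steps of the tensor tubal-global Arnoldi process described in the context have been run (without breakdown). Then $$\mathscr{A}\star\mathbb{V}_m=\mathbb{V}_m\star(\mathscr{H}_m\circledast\mathscr{I}_{ssn_3})+\mathscr{V}_{m+1}\star((\mathbf{h}_{m+1,m}\star\mathscr{E}_m)\circledast\mathscr{I}_{ssn_3}),$$ $$\mathbb{V}_m^T\diamondsuit(\mathscr{A}\star\mathbb{V}_m)=\mathscr{H}_m,\qquad \mathscr{A}\star\mathbb{V}_m=\mathbb{V}_{m+1}\star(\widetilde{\mathscr{H}}_m\circledast\mathscr{I}_{ssn_3}),$$ $$\mathbb{V}_{m+1}^T\diamondsuit(\mathscr{A}\star\mathbb{V}_m)=\widetilde{\mathscr{H}}_m,\qquad \mathbb{V}_m^T\diamondsuit\mathbb{V}_m=\mathscr{I}_{mmn_3}.$$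
   Context: All tensors are real third-order arrays. $\widehat{\mathscr{A}}=\mathscr{A}\times_3F_{n_3}$ denotes the tensor obtained by applying the discrete Fourier transform ($F_{n_3}$ with entries $\omega^{(i-1)(j-1)}$, $\omega=e^{-2\pi\mathrm{i}/n_3}$) to each tube; its frontal slices $\hat A^{(k)}$ are the Fourier slices. T-product: $\mathscr{A}\star\mathscr{B}$ has Fourier slices $\hat A^{(k)}\hat B^{(k)}$. Transpose $\mathscr{A}^T$: transpose each frontal slice and reverse the order of frontal slices $2,\dots,n_3$. $\mathscr{I}_{nnn_3}$: first frontal slice $I_n$, others zero. A tube is an element of $\mathbb{R}^{1\times1\times n_3}$; $\mathbf{e}$ has entries $(1,0,\dots,0)$, $\mathbf{o}$ is the zero tube. For a tube $\mathbf{a}$, $\mathbf{a}\divideontimes\mathscr{B}$ has $(i,j)$ tube $\mathbf{a}\star\mathscr{B}(i,j,:)$. T-Kronecker product $\mathscr{A}\circledast\mathscr{B}$: Fourier slices $\hat A^{(k)}\otimes\hat B^{(k)}$. T-trace: tube whose $k$-th Fourier slice is the trace of the $k$-th Fourier slice. Tubal inner product $\langle\mathscr{X},\mathscr{Y}\rangle_T=\text{T-trace}(\mathscr{X}^T\star\mathscr{Y})$. T-diamond product: for $\mathscr{X}=[\mathscr{X}_1,\dots,\mathscr{X}_p]$, $\mathscr{Y}=[\mathscr{Y}_1,\dots,\mathscr{Y}_\ell]$ with blocks in $\mathbb{R}^{n\times s\times n_3}$ (concatenated along mode 2), $\mathscr{X}^T\diamondsuit\mathscr{Y}\in\mathbb{R}^{p\times\ell\times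 n_3}$ has $(i,j)$ tube $\langle\mathscr{X}_i,\mathscr{Y}_j\rangle_T$. Normalization of $\mathscr{W}$: $\mathbf{a}$ is the tube with $k$-th Fourier coefficient $\|\hat W^{(k)}\|_F$ and $\mathscr{Q}$ has Fourier slices $\hat W^{(k)}/\|\hat W^{(k)}\|_F$; output $[\mathscr{Q},\mathbf{a}]$. Tubal-global Arnoldi process: $[\mathscr{V}_1,\mathbf{r}_{1,1}]=\mathrm{Normalization}(\mathscr{V})$; for $j=1,\dots,m$: $\mathscr{W}=\mathscr{A}\star\mathscr{V}_j$; for $i=1,\dots,j$: $\mathbf{h}_{i,j}=\langle\mathscr{V}_i,\mathscr{W}\rangle_T$, $\mathscr{W}\leftarrow\mathscr{W}-\mathbf{h}_{i,j}\divideontimes\mathscr{V}_i$; then $[\mathscr{V}_{j+1},\mathbf{h}_{j+1,j}]=\mathrm{Normalization}(\mathscr{W})$. Notation: $\mathbb{V}_m=[\mathscr{V}_1,\dots,\mathscr{V}_m]\in\mathbb{R}^{n\times sm\times n_3}$, $\mathbb{V}_{m+1}=[\mathbb{V}_m,\mathscr{V}_{m+1}]$, $\mathscr{A}\star\mathbb{V}_m=[\mathscr{A}\star\mathscr{V}_1,\dots,\mathscr{A}\star\mathscr{V}_m]$. $\widetilde{\mathscr{H}}_m\in\mathbb{R}^{(m+1)\times m\times n_3}$ is the Hessenberg tensor whose $(i,j)$ tube is $\mathbf{h}_{i,j}$ for $i\le j+1$ and $\mathbf{o}$ otherwise; $\mathscr{H}_m\in\mathbb{R}^{m\times m\times n_3}$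 is obtained by deleting its last horizontal slice; $\mathscr{E}_m=[\mathbf{o},\dots,\mathbf{o},\mathbf{e}]\in\mathbb{R}^{1\times m\times n_3}$. *)

(* Defs.v *)
From mathcomp Require Import all_boot all_algebra.
From mathcomp Require Import complex mxtens.
From mathcomp Require Import reals trigo.

Set Implicit Arguments.
Unset Strict Implicit.
Unset Printing Implicit Defensive.

Import GRing.Theory Num.Theory.
Local Open Scope ring_scope.

Section Tensors.
Variable R : realType.
Local Notation C := (R[i]).

(* A real third-order tensor in R^{p x q x n3}, given by its frontal slices. *)
Definition tensor (p q n3 : nat) := 'I_n3 -> 'M[R]_(p, q).
Definition tube (n3 : nat) := tensor 1 1 n3.

Variable n3 : nat.

Definition omega : C :=
  Complex (cos (2 * pi / n3%:R)) (- sin (2 * pi / n3%:R)).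

(* Fourier slices: \hat A^{(k)} = sum_j omega^{k j} A^{(j)} (DFT along tubes;
   0-based indices, so F_{n3} has entries omega^{(i-1)(j-1)}). *)
Definition fft p q (A : tensor p q n3) (k : 'I_n3) : 'M[C]_(p, q) :=
  \sum_(j < n3) omega ^+ (k * j) *: map_mx (fun x : R => (x%:C)%C) (A j).

(* Inverse DFT, returning the real tensor whose Fourier slices are F
   (F is conjugate-symmetric in all uses below, so the result is real). *)
Definition ifft p q (F : 'I_n3 -> 'M[C]_(p, q)) : tensor p q n3 :=
  fun j => map_mx (@complex.Re R)
    ((n3%:R)^-1 *: \sum_(k < n3) (omega ^+ (k * j))^-1 *: F k).

Definition tprod p q r (A : tensor p q n3) (B : tensor q r n3) : tensor p r n3 :=
  ifft (fun k => fft A k *m fft B k).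

Definition tadd p q (A B : tensor p q n3) : tensor p q n3 := fun k => A k + B k.
Definition topp p q (A : tensor p q n3) : tensor p q n3 := fun k => - A k.
Definition tzero p q : tensor p q n3 := fun _ => 0.

(* index k |-> (n3 - k) mod n3 : reverses the frontal slices 2..n3 *)
Definition revk (k : 'I_n3) : 'I_n3 :=
  Ordinal (ltn_pmod (n3 - k) (leq_ltn_trans (leq0n k) (ltn_ord k))).

Definition ttr p q (A : tensor p q n3) : tensor q p n3 :=
  fun k => (A (revk k))^T.

Definition tid p : tensor p p n3 :=
  fun k => if val k == 0%N then 1%:M else 0.

Definition te : tube n3 := tid 1.
Definition to : tube n3 := tzero 1 1.

Definition tubeof p q (B : tensor p q n3) i j : tube n3 :=
  fun k => (B k i j)%:M.
Definition of_tubes p q (f : 'I_p -> 'I_q -> tube n3) : tensor p q n3 :=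
  fun k => \matrix_(i, j) f i j k 0 0.

Definition tscal p q (a : tube n3) (B : tensor p q n3) : tensor p q n3 :=
  of_tubes (fun i j => tprod a (tubeof B i j)).

Definition tkron p q r s (A : tensor p q n3) (B : tensor r s n3)
  : tensor (p * r) (q * s) n3 :=
  ifft (fun k => fft A k *t fft B k).

Definition ttrace p (A : tensor p p n3) : tube n3 :=
  ifft (fun k => (\tr (fft A k))%:M).

Definition tinner p q (X Y : tensor p q n3) : tube n3 :=
  ttrace (tprod (ttr X) Y).

(* Concatenation along mode 2 of blocks X_1, ..., X_l (1-based family). *)
Definition tconcat p s (X : nat -> tensor p s n3) (l : nat)
  : tensor p (l * s) n3 :=
  fun k => \matrix_(i, c)
    X (mxtens_unindex c).1.+1 k i (mxtens_unindex c).2.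

(* j-th block (0-based) of a tensor concatenated from blocks of width s *)
Definition tblock p l s (X : tensor p (l * s) n3) (j : 'I_l) : tensor p s n3 :=
  fun k => \matrix_(i, c) X k i (mxtens_index (j, c)).

Definition tdiamond p s l1 l2 (X : tensor p (l1 * s) n3)
  (Y : tensor p (l2 * s) n3) : tensor l1 l2 n3 :=
  of_tubes (fun i j => tinner (tblock X i) (tblock Y j)).

Definition frobC p q (M : 'M[C]_(p, q)) : R :=
  Num.sqrt (\sum_(i < p) \sum_(j < q)
              ((complex.Re (M i j)) ^+ 2 + (complex.Im (M i j)) ^+ 2)).

(* Normalization(W) = [Q, a] *)
Definition normQ p q (W : tensor p q n3) : tensor p q n3 :=
  ifft (fun k => ((frobC (fft W k))^-1)%:C%C *: fft W k).
Definition norma p q (W : tensor p q n3) : tube n3 :=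
  ifft (fun k => ((frobC (fft W k))%:C%C)%:M).

Definition tcastr p p' q (e : p = p') (A : tensor p q n3) : tensor p' q n3 :=
  fun k => castmx (e, erefl q) (A k).

(* m steps of the tubal-global Arnoldi process applied to (A, V0), without
   breakdown, produce the blocks V (1-based: V 1, ..., V (m+1)) and the tubes
   h i j.  W j i is the vector W in the inner loop of step j after i
   orthogonalisations (modified Gram-Schmidt). *)
Definition tubal_global_arnoldi n s (A : tensor n n n3) (V0 : tensor n s n3)
  (m : nat) (V : nat -> tensor n s n3) (h : nat -> nat -> tube n3) : Prop :=
  exists W : nat -> nat -> tensor n s n3,
  [/\ (forall k, frobC (fft V0 k) != 0),
      V 1%N = normQ V0,
      (forall j, (1 <= j <= m)%N -> W j 0%N = tprod A (V j)),
      (forall j i, (1 <= j <= m)%N -> (1 <= i <= j)%N ->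
          h i j = tinner (V i) (W j i.-1) /\
          W j i = tadd (W j i.-1) (topp (tscal (h i j) (V i)))) &
      (forall j, (1 <= j <= m)%N ->
          [/\ forall k, frobC (fft (W j j) k) != 0,
              V j.+1 = normQ (W j j) & h j.+1 j = norma (W j j)])].

Definition Htilde (h : nat -> nat -> tube n3) (m : nat) : tensor (m + 1) m n3 :=
  of_tubes (fun i j => if (i <= j.+1)%N then h i.+1 j.+1 else to).
Definition Hm (h : nat -> nat -> tube n3) (m : nat) : tensor m m n3 :=
  fun k => usubmx (Htilde h m k).
Definition Em (m : nat) : tensor 1 m n3 :=
  of_tubes (fun _ j => if val j == m.-1 then te else to).

End Tensors.

Arguments tid {R n3} p.
Arguments Em {R n3} m.
Arguments te {R n3}.
Arguments to {R n3}.
Arguments tzero {R n3 p q}.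

(* Main.v *)
Require Import Defs.
From mathcomp Require Import all_boot all_order all_algebra.
From mathcomp Require Import complex mxtens.
From mathcomp Require Import reals trigo.
From mathcomp Require Import lra ring zify.
Set Implicit Arguments.
Unset Strict Implicit.
Unset Printing Implicit Defensive.
Import Order.TTheory GRing.Theory Num.Theory.
Local Open Scope ring_scope.
Local Open Scope complex_scope.
Section S.
Variable R : realType.
Variable n3 : nat.
Local Notation C := (R[i]).
Local Notation om := (@omega R n3).
Lemma mulcE (a b c d : R) : (Complex a b) * (Complex c d) = Complex (a*c - b*d) (a*d + b*c) :> C.
Proof. by []. Qed.
Let t : R := 2 * pi / n3%:R.
Lemma omX k : om ^+ k = Complex (cos (k%:R * t)) (- sin (k%:R * t)).
Proof.
elim: k => [|k IH]; first by rewrite expr0 mul0r cos0 sin0 oppr0.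
rewrite exprSr IH /omega -/t mulcE -addn1 natrD mulrDl mul1r cosD sinD.
congr Complex; lra.
Qed.
Lemma om_neq0 : om != 0.
Proof.
apply/eqP => /(congr1 (fun z => complex.Re z ^+ 2 + complex.Im z ^+ 2)) /=.
rewrite sqrrN cos2Dsin2 expr0n /= addr0 => /eqP; by rewrite oner_eq0.
Qed.
Lemma om_n3 : (0 < n3)%N -> om ^+ n3 = 1.
Proof.
move=> n0; rewrite omX /t [_ * (_ / _)]mulrC divfK ?pnatr_eq0 -?lt0n //.
by rewrite mulrC mulr_natr cos2pi sin2pi oppr0.
Qed.
Lemma om_ne1 d : (0 < d < n3)%N -> om ^+ d != 1.
Proof.
case/andP=> d0 dn; have n0 : (0 < n3)%N by apply: leq_trans dn.
rewrite omX; apply/eqP => [[Hc Hs]].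
have Hs' : sin (d%:R * t) = 0 by rewrite -[LHS]opprK Hs oppr0.
set x := d%:R * t in Hc Hs'.
have n3p : 0 < n3%:R :> R by rewrite ltr0n.
have x0 : 0 < x by rewrite /x /t mulr_gt0 ?ltr0n // divr_gt0 ?mulr_gt0 ?pi_gt0.
have x2 : x < pi *+ 2.
  have -> : x = (d%:R / n3%:R) * (pi *+ 2).
    rewrite /x /t -mulr_natl; field; by rewrite pnatr_eq0 -lt0n.
  have p2 : 0 < pi *+ 2 :> R by rewrite mulrn_wgt0 // pi_gt0.
  by rewrite (gtr_pMl _ p2) (ltr_pdivrMr _ _ n3p) mul1r ltr_nat.
case: (ltrgtP x pi) => hx.
- by move: (sin_gt0_pi (x:=x)); rewrite x0 hx Hs' ltxx => /(_ isT).
- have := sin_gt0_pi (x := x - pi).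
  rewrite subr_gt0 hx ltrBlDr -mulr2n x2 => /(_ isT).
  by rewrite sinB sinpi cospi Hs' mul0r mulr0 subr0 ltxx.
- by move: Hc; rewrite hx cospi; lra.
Qed.

Lemma mul_eq1_inv (x y : C) : x * y = 1 -> x = y^-1.
Proof.
move=> H; have y0 : y != 0 by apply/eqP=> y0; move: H; rewrite y0 mulr0 => /eqP; rewrite eq_sym oner_eq0.
by rewrite -[x]mulr1 -(divff y0) mulrA H mul1r.
Qed.
Lemma omX_neq0 k : om ^+ k != 0.
Proof. by rewrite expf_neq0 // om_neq0. Qed.
Lemma om_inj a b : (a < n3)%N -> (b < n3)%N -> om ^+ a = om ^+ b -> a = b.
Proof.
wlog ab : a b / (a <= b)%N.
  move=> W ha hb E; case: (leqP a b) => h; first exact: W.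
  by apply/esym/W => //; apply: ltnW.
move=> ha hb E; apply/eqP; rewrite eqn_leq ab /= leqNgt; apply/negP => lt.
have : om ^+ (b - a) == 1.
  have : om ^+ a * om ^+ (b - a) = om ^+ a * 1 by rewrite -exprD subnKC // E mulr1.
  by move/(mulfI (omX_neq0 a)) => ->.
by rewrite (negbTE (om_ne1 _)) // subn_gt0 lt /= (leq_ltn_trans (leq_subr _ _) hb).
Qed.
Lemma om_mod k : om ^+ k = om ^+ (k %% n3).
Proof.
case: (posnP n3) => [n0|n0]; first by rewrite n0 modn0.
by rewrite expr_mod // om_n3.
Qed.
Lemma om_conj k : conjc (om ^+ k) = (om ^+ k)^-1.
Proof.
apply: mul_eq1_inv; rewrite mulrC omX /conjc opprK mulcE.
congr Complex; first by rewrite mulNr opprK -!expr2 cos2Dsin2.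
by rewrite mulNr mulrC subrr.
Qed.
Lemma revk_val (k : 'I_n3) : val (revk k) = ((n3 - k) %% n3)%N.
Proof. by []. Qed.
Lemma om_rev (k : 'I_n3) l : om ^+ (revk k * l) = (om ^+ (k * l))^-1.
Proof.
apply: mul_eq1_inv; rewrite -exprD -mulnDl om_mod revk_val -modnMml modnDml subnK; last exact: ltnW.
by rewrite modnn mul0n mod0n expr0.
Qed.
Lemma om_orth (j l : 'I_n3) :
  \sum_(k < n3) om ^+ (k * j) * (om ^+ (k * l))^-1 = if j == l then n3%:R else 0.
Proof.
have n0 : (0 < n3)%N by apply: leq_ltn_trans (ltn_ord j).
set z := om ^+ j / om ^+ l.
have -> : \sum_(k < n3) om ^+ (k * j) * (om ^+ (k * l))^-1 = \sum_(k < n3) z ^+ k.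
  by apply: eq_bigr => k _; rewrite /z exprMn exprVn -!exprM ![(_ * k)%N]mulnC.
case: eqP => [jl|jl].
  by rewrite /z jl divff ?omX_neq0 // (eq_bigr (fun _ => 1)) => [|k _]; rewrite ?expr1n // sumr_const card_ord.
have z1 : z - 1 != 0.
  rewrite subr_eq0; apply/eqP => /eqP; rewrite /z (can2_eq (divfK (omX_neq0 l)) (mulfK (omX_neq0 l))) mul1r.
  by move/eqP/om_inj => /(_ (ltn_ord j) (ltn_ord l)) /val_inj.
have zn : z ^+ n3 = 1.
  by rewrite /z exprMn exprVn -!exprM ![(_ * n3)%N]mulnC !exprM om_n3 // !expr1n invr1 mulr1.
apply/eqP; move: (subrX1 z n3); rewrite zn subrr => /esym/eqP; rewrite mulf_eq0 (negbTE z1) //.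
Qed.

Lemma revkK : involutive (@revk n3).
Proof.
move=> k; apply: val_inj; rewrite !revk_val /=.
have kn := ltn_ord k.
case: (posnP k) => [k0|k0].
  by rewrite k0 subn0 modnn subn0 modnn.
rewrite (modn_small (m := n3 - k)); last by rewrite ltn_subrL k0 (leq_ltn_trans (leq0n _) kn).
by rewrite (subKn (ltnW kn)) modn_small.
Qed.


Lemma reindex_revk (F : 'I_n3 -> C) : \sum_(k < n3) F (revk k) = \sum_(k < n3) F k.
Proof. by rewrite [RHS](reindex_inj (can_inj revkK)). Qed.

Lemma fft_entry p q (X : tensor R p q n3) k i j :
  fft X k i j = \sum_(l < n3) om ^+ (k * l) * (X l i j)%:C.
Proof. by rewrite /fft summxE; apply: eq_bigr => l _; rewrite !mxE. Qed.

Definition csym p q (F : 'I_n3 -> 'M[C]_(p, q)) :=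
  forall k, F (revk k) = map_mx conjc (F k).

Lemma conjcM (x y : C) : conjc (x * y) = conjc x * conjc y.
Proof. exact: (rmorphM conjc x y). Qed.
Lemma conjcD (x y : C) : conjc (x + y) = conjc x + conjc y.
Proof. exact: (rmorphD conjc x y). Qed.
Lemma conjcN (x : C) : conjc (- x) = - conjc x.
Proof. exact: (rmorphN conjc x). Qed.
Lemma conjc_sum (I : finType) (F : I -> C) : conjc (\sum_i F i) = \sum_i conjc (F i).
Proof. exact: (rmorph_sum conjc _ _ _). Qed.
Lemma conjcKK (x : C) : conjc (conjc x) = x.
Proof. exact: conjcK. Qed.
Lemma conj_omX_real k (x : R) : conjc (om ^+ k * x%:C) = (om ^+ k)^-1 * x%:C.
Proof. by rewrite conjcM om_conj conjc_real. Qed.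

Lemma fft_cs p q (X : tensor R p q n3) : csym (fft X).
Proof.
move=> k; apply/matrixP => i j; rewrite mxE !fft_entry conjc_sum.
by apply: eq_bigr => l _; rewrite conj_omX_real om_rev.
Qed.

Lemma n3_gt0 (k : 'I_n3) : (0 < n3)%N.
Proof. exact: leq_ltn_trans (leq0n k) (ltn_ord k). Qed.

Lemma ifft_fft p q (X : tensor R p q n3) : ifft (fft X) = X.
Proof.
apply: boolp.funext => j; apply/matrixP => r c.
rewrite /ifft mxE mxE summxE.
have -> : \sum_(k < n3) ((om ^+ (k * j))^-1 *: fft X k) r c = \sum_(l < n3) (\sum_(k < n3) om ^+ (k * l) * (om ^+ (k * j))^-1) * (X l r c)%:C.
  under eq_bigr => k _ do rewrite mxE fft_entry mulr_sumr.
  rewrite exchange_big /=; apply: eq_bigr => l _; rewrite mulr_suml; apply: eq_bigr => k _.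
  by rewrite mulrCA mulrA.
under eq_bigr => l _ do rewrite om_orth.
rewrite (bigD1 j) //= eqxx big1 => [|l /negbTE ->]; last by rewrite mul0r.
by rewrite addr0 mulrA mulVf ?pnatr_eq0 -?lt0n ?(n3_gt0 j) // mul1r.
Qed.

Lemma fft_inj p q (X Y : tensor R p q n3) : fft X = fft Y -> X = Y.
Proof. by move=> E; rewrite -[X]ifft_fft E ifft_fft. Qed.

Lemma half_add (x : C) : (x + x) / 2%:R = x.
Proof. by rewrite -mulr2n -(mulr_natr x 2) mulfK // pnatr_eq0. Qed.

Lemma fft_ifft p q (F : 'I_n3 -> 'M[C]_(p, q)) : csym F -> fft (ifft F) = F.
Proof.
move=> cF; apply: boolp.funext => k; apply/matrixP => r c.
set G := fun l : 'I_n3 => (n3%:R)^-1 *: \sum_(k < n3) (om ^+ (k * l))^-1 *: F k.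
have GE l : G l r c = (n3%:R)^-1 * \sum_(k' < n3) (om ^+ (k' * l))^-1 * F k' r c.
  by rewrite /G mxE summxE; congr (_ * _); apply: eq_bigr => k' _; rewrite mxE.
have Greal l : ((complex.Re (G l r c))%:C)%C = G l r c.
  rewrite ReJ_add.
  have -> : conjc (G l r c) = G l r c.
    rewrite GE conjcM conjc_sum conjc_inv conjc_nat; congr (_ * _).
    rewrite -reindex_revk; apply: eq_bigr => k' _.
    by rewrite conjcM om_rev invrK om_conj cF mxE conjcKK.
  by rewrite half_add.
rewrite fft_entry.
under eq_bigr => l _ do rewrite /ifft -/G mxE Greal GE mulr_sumr mulr_sumr.
rewrite exchange_big /=.
have -> : \sum_(i < n3) \sum_(l < n3) om ^+ (k * l) * (n3%:R^-1 * (om ^- (i * l) * F i r c)) = \sum_(i < n3) (n3%:R^-1 * F i r c) * \sum_(l < n3) om ^+ (l * k) * (om ^+ (l * i))^-1.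
  apply: eq_bigr => i _; rewrite mulr_sumr; apply: eq_bigr => l _; rewrite (mulnC l k) (mulnC l i); ring.
under eq_bigr => i _ do rewrite om_orth.
rewrite (bigD1 k) //= eqxx big1 => [|i /negbTE]; last by rewrite eq_sym => ->; rewrite mulr0.
by rewrite addr0 mulrAC mulVf ?mul1r // pnatr_eq0 -lt0n (n3_gt0 k).
Qed.

Lemma Re_conjc (x : C) : complex.Re (conjc x) = complex.Re x.
Proof. by case: x. Qed.
Lemma Im_conjc (x : C) : complex.Im (conjc x) = - complex.Im x.
Proof. by case: x. Qed.
Lemma frobC_conj p q (M : 'M[C]_(p, q)) : frobC (map_mx conjc M) = frobC M.
Proof.
rewrite /frobC; congr Num.sqrt; apply: eq_bigr => i _; apply: eq_bigr => j _.
by rewrite mxE Re_conjc Im_conjc sqrrN.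
Qed.

Lemma fft_add p q (A B : tensor R p q n3) k : fft (tadd A B) k = fft A k + fft B k.
Proof.
apply/matrixP => i j; rewrite mxE !fft_entry -big_split /=; apply: eq_bigr => l _.
by rewrite /tadd mxE rmorphD mulrDr.
Qed.
Lemma fft_opp p q (A : tensor R p q n3) k : fft (topp A) k = - fft A k.
Proof.
apply/matrixP => i j; rewrite mxE !fft_entry -sumrN; apply: eq_bigr => l _.
by rewrite /topp mxE rmorphN mulrN.
Qed.

Lemma cs_mul p q r (F : 'I_n3 -> 'M[C]_(p, q)) (G : 'I_n3 -> 'M[C]_(q, r)) :
  csym F -> csym G -> csym (fun k => F k *m G k).
Proof. by move=> cF cG k; rewrite cF cG map_mxM. Qed.

Lemma fft_prod p q r (A : tensor R p q n3) (B : tensor R q r n3) k :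
  fft (tprod A B) k = fft A k *m fft B k.
Proof. by rewrite /tprod fft_ifft //; apply: cs_mul; apply: fft_cs. Qed.

Lemma fft_kron p q r s (A : tensor R p q n3) (B : tensor R r s n3) k :
  fft (tkron A B) k = fft A k *t fft B k.
Proof.
rewrite /tkron fft_ifft // => k'; rewrite !fft_cs.
by rewrite (map_mxT conjc).
Qed.

Lemma conjc_tr p (M : 'M[C]_p) : conjc (\tr M) = \tr (map_mx conjc M).
Proof. by rewrite /mxtrace conjc_sum; apply: eq_bigr => i _; rewrite mxE. Qed.

Lemma fft_trace p (A : tensor R p p n3) k : fft (ttrace A) k = (\tr (fft A k))%:M.
Proof.
rewrite /ttrace fft_ifft // => k'; rewrite fft_cs -conjc_tr.
by rewrite (map_scalar_mx conjc).
Qed.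

Lemma fft_ttr p q (X : tensor R p q n3) k : fft (ttr X) k = (map_mx conjc (fft X k))^T.
Proof.
apply/matrixP => i j; rewrite !mxE !fft_entry conjc_sum -reindex_revk.
apply: eq_bigr => l _; rewrite /ttr mxE revkK conj_omX_real (mulnC k) om_rev.
by rewrite (mulnC l).
Qed.

Lemma fft_tid p (k : 'I_n3) : fft (@tid R n3 p) k = 1%:M.
Proof.
apply/matrixP => i j; rewrite fft_entry.
have n0 := n3_gt0 k.
rewrite (bigD1 (Ordinal n0)) //= big1 => [|l].
  by rewrite /tid /= muln0 expr0 mul1r addr0 !mxE; case: (i == j).
rewrite /tid -val_eqE /= => /negbTE ->; by rewrite mxE mulr0.
Qed.

Lemma fft_normQ p q (W : tensor R p q n3) k :
  fft (normQ W) k = ((frobC (fft W k))^-1)%:C *: fft W k.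
Proof.
rewrite /normQ fft_ifft // => k'; rewrite fft_cs frobC_conj.
apply/matrixP => i j; rewrite !mxE conjcM conjc_real //.
Qed.

Lemma fft_norma p q (W : tensor R p q n3) k :
  fft (norma W) k = ((frobC (fft W k))%:C)%:M.
Proof.
rewrite /norma fft_ifft // => k'; rewrite fft_cs frobC_conj.
by rewrite (map_scalar_mx conjc); congr (_%:M); symmetry; exact: conjc_real.
Qed.

Lemma fft_tubeof p q (B : tensor R p q n3) i j k :
  fft (tubeof B i j) k = (fft B k i j)%:M.
Proof.
apply/matrixP => a b; rewrite !ord1 fft_entry mxE eqxx mulr1n fft_entry.
by apply: eq_bigr => l _; rewrite /tubeof mxE eqxx mulr1n.
Qed.

Lemma fft_of_tubes p q (f : 'I_p -> 'I_q -> tube R n3) k :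
  fft (of_tubes f) k = \matrix_(i, j) fft (f i j) k 0 0.
Proof.
apply/matrixP => i j; rewrite mxE !fft_entry; apply: eq_bigr => l _.
by rewrite /of_tubes mxE.
Qed.

Lemma fft_tscal p q (a : tube R n3) (B : tensor R p q n3) k :
  fft (tscal a B) k = fft a k 0 0 *: fft B k.
Proof.
apply/matrixP => i j; rewrite /tscal fft_of_tubes !mxE fft_prod fft_tubeof.
by rewrite mul_mx_scalar mxE mulrC.
Qed.

Definition ip p q (X Y : 'M[C]_(p, q)) : C := \tr ((map_mx conjc X)^T *m Y).

Lemma fft_tinner p q (X Y : tensor R p q n3) k :
  fft (tinner X Y) k = (ip (fft X k) (fft Y k))%:M.
Proof. by rewrite /tinner fft_trace fft_prod fft_ttr. Qed.

Lemma fft_tblock p l s (X : tensor R p (l * s) n3) (j : 'I_l) k :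
  fft (tblock X j) k = \matrix_(i, c) fft X k i (mxtens_index (j, c)).
Proof.
apply/matrixP => i c; rewrite mxE !fft_entry; apply: eq_bigr => l' _.
by rewrite /tblock mxE.
Qed.

Lemma fft_tconcat p s (X : nat -> tensor R p s n3) l k :
  fft (tconcat X l) k = \matrix_(i, c) fft (X (mxtens_unindex c).1.+1) k i (mxtens_unindex c).2.
Proof.
apply/matrixP => i c; rewrite mxE !fft_entry; apply: eq_bigr => l' _.
by rewrite /tconcat mxE.
Qed.

Lemma fft_tblock_concat p s (X : nat -> tensor R p s n3) l (j : 'I_l) k :
  fft (tblock (tconcat X l) j) k = fft (X j.+1) k.
Proof.
apply/matrixP => i c; rewrite fft_tblock mxE fft_tconcat mxE.
by rewrite mxtens_indexK.
Qed.

Lemma fft_tcastr p p' q (e : p = p') (X : tensor R p q n3) k :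
  fft (tcastr e X) k = castmx (e, erefl q) (fft X k).
Proof.
apply/matrixP => i c; rewrite castmxE !fft_entry; apply: eq_bigr => l' _.
by rewrite /tcastr castmxE.
Qed.

Lemma fft_Hm (h : nat -> nat -> tube R n3) m k : fft (Hm h m) k = usubmx (fft (Htilde h m) k).
Proof.
apply/matrixP => i c; rewrite mxE !fft_entry; apply: eq_bigr => l' _.
by rewrite /Hm mxE.
Qed.

Lemma ip_sum p q (X Y : 'M[C]_(p, q)) :
  ip X Y = \sum_(c < q) \sum_(r < p) conjc (X r c) * Y r c.
Proof.
rewrite /ip /mxtrace; apply: eq_bigr => c _; rewrite mxE.
by apply: eq_bigr => r _; rewrite !mxE.
Qed.
Lemma ipDr p q (X Y Z : 'M[C]_(p, q)) : ip X (Y + Z) = ip X Y + ip X Z.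
Proof. by rewrite /ip mulmxDr mxtraceD. Qed.
Lemma ipZr p q (X Y : 'M[C]_(p, q)) a : ip X (a *: Y) = a * ip X Y.
Proof. by rewrite /ip -scalemxAr mxtraceZ. Qed.
Lemma ipNr p q (X Y : 'M[C]_(p, q)) : ip X (- Y) = - ip X Y.
Proof. by rewrite -scaleN1r ipZr mulN1r. Qed.
Lemma ip0r p q (X : 'M[C]_(p, q)) : ip X 0 = 0.
Proof. by rewrite /ip mulmx0 mxtrace0. Qed.
Lemma ip_sumr p q (X : 'M[C]_(p, q)) (I : finType) (F : I -> 'M[C]_(p, q)) :
  ip X (\sum_i F i) = \sum_i ip X (F i).
Proof. exact: (big_morph (ip X) (ipDr X) (ip0r X)). Qed.
Lemma ip_conj p q (X Y : 'M[C]_(p, q)) : conjc (ip X Y) = ip Y X.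
Proof.
rewrite !ip_sum conjc_sum; apply: eq_bigr => c _; rewrite conjc_sum.
by apply: eq_bigr => r _; rewrite conjcM conjcKK mulrC.
Qed.
Lemma ipZl p q (X Y : 'M[C]_(p, q)) a : ip (a *: X) Y = conjc a * ip X Y.
Proof. by rewrite -ip_conj ipZr conjcM ip_conj. Qed.

Lemma realcM (x y : R) : (x * y)%:C = x%:C * y%:C :> C.
Proof. exact: (rmorphM (real_complex R) x y). Qed.
Lemma realc_sum (I : finType) (F : I -> R) : (\sum_i F i)%:C = \sum_i (F i)%:C :> C.
Proof. exact: (rmorph_sum (real_complex R) _ _ _). Qed.
Lemma realc1 : (1 : R)%:C = 1 :> C. Proof. by []. Qed.

Lemma conj_mul_self (x : C) : conjc x * x = ((complex.Re x) ^+ 2 + (complex.Im x) ^+ 2)%:C.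
Proof. case: x => a b; rewrite /conjc mulcE /=; congr Complex; ring. Qed.

Lemma ip_frob p q (X : 'M[C]_(p, q)) : ip X X = ((frobC X) ^+ 2)%:C.
Proof.
rewrite ip_sum /frobC sqr_sqrtr; last by apply: sumr_ge0 => i _; apply: sumr_ge0 => j _; rewrite addr_ge0 ?sqr_ge0.
rewrite realc_sum exchange_big /=; apply: eq_bigr => r _; rewrite realc_sum.
by apply: eq_bigr => c _; rewrite conj_mul_self.
Qed.

Lemma ip_norm p q (X : 'M[C]_(p, q)) : frobC X != 0 ->
  ip (((frobC X)^-1)%:C *: X) (((frobC X)^-1)%:C *: X) = 1.
Proof.
move=> f0; rewrite ipZl ipZr ip_frob conjc_real -!realcM -realc1; congr (_%:C).
by field.
Qed.

Lemma arnoldi_fourier p q (a : 'M[C]_p) (v : nat -> 'M[C]_(p,q))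
  (w : nat -> nat -> 'M[C]_(p,q)) (hk : nat -> nat -> C) (m : nat) :
  ip (v 1%N) (v 1%N) = 1 ->
  (forall j, (1 <= j <= m)%N -> w j 0%N = a *m v j) ->
  (forall j i, (1 <= j <= m)%N -> (1 <= i <= j)%N ->
     hk i j = ip (v i) (w j i.-1) /\ w j i = w j i.-1 - hk i j *: v i) ->
  (forall j, (1 <= j <= m)%N -> [/\ ip (v j.+1) (v j.+1) = 1,
       w j j = hk j.+1 j *: v j.+1 & exists c, v j.+1 = c *: w j j]) ->
  (forall x y, (1 <= x <= m.+1)%N -> (1 <= y <= m.+1)%N -> ip (v x) (v y) = (x == y)%:R) /\
  (forall j, (1 <= j <= m)%N -> a *m v j = \sum_(i < j.+1) hk i.+1 j *: v i.+1).
Proof.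
move=> H0 H1 H2 H3; split.
  suff P : forall j, (1 <= j <= m.+1)%N -> forall x y, (1 <= x <= j)%N -> (1 <= y <= j)%N -> ip (v x) (v y) = (x == y)%:R.
    by move=> x y hx hy; apply: (P m.+1) => //; rewrite leqnn.
  elim=> [|j IH] //; case: (posnP j) => [->|j0] hj1.
    move=> x y /andP [x1 x2] /andP [y1 y2].
    have -> : x = 1%N by apply/eqP; rewrite eqn_leq x1 x2.
    by have -> : y = 1%N by apply/eqP; rewrite eqn_leq y1 y2.
  move: hj1 => /andP [_ jm].
  have Pj' : forall x y, (1 <= x <= j)%N -> (1 <= y <= j)%N -> ip (v x) (v y) = (x == y)%:R.
    by apply: IH; rewrite j0 /= ltnW.
  rewrite ltnS in jm.
  have hj : (1 <= j <= m)%N by rewrite j0.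
  have Win : forall i, (i <= j)%N -> forall l, (1 <= l <= i)%N -> ip (v l) (w j i) = 0.
    elim=> [|i IHi] ij l; first by rewrite leqn0 => /andP [] /[swap] /eqP ->.
    have [hh ww] := H2 j i.+1 hj (ij).
    rewrite ww /= ipDr ipNr ipZr.
    move=> /andP [l1]; rewrite leq_eqVlt => /orP [/eqP ->|li].
      by rewrite -hh Pj' ?eqxx ?mulr1 ?subrr // ij.
    rewrite ltnS in li.
    rewrite IHi ?(ltnW ij) ?l1 ?li // Pj' ?l1 ?(leq_trans li (ltnW ij)) ?ij //.
    by rewrite (@ltn_eqF l i.+1) ?ltnS // mulr0 subrr.
  have orth : forall l, (1 <= l <= j)%N -> ip (v l) (v j.+1) = 0.
    move=> l hl; have [_ _ [c ->]] := H3 j hj.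
    by rewrite ipZr Win // mulr0.
  move=> x y /andP [x1]; rewrite leq_eqVlt => /orP [/eqP ->|xj] /andP [y1]; rewrite leq_eqVlt => /orP [/eqP ->|yj].
  - by rewrite eqxx; case: (H3 j hj).
  - rewrite ltnS in yj; rewrite -ip_conj orth ?y1 ?yj // gtn_eqF ?ltnS //.
    by rewrite (rmorph0 conjc).
  - rewrite ltnS in xj; rewrite orth ?x1 ?xj // ltn_eqF ?ltnS //.
  - by rewrite ltnS in xj yj; apply: Pj'; rewrite ?x1 ?y1.
move=> j hj.
have Wsum : forall i, (i <= j)%N -> w j 0%N = w j i + \sum_(l < i) hk l.+1 j *: v l.+1.
  elim=> [|i IHi] ij; first by rewrite big_ord0 addr0.
  have [_ ww] := H2 j i.+1 hj ij.
  rewrite big_ord_recr /= IHi ?(ltnW ij) // ww /=.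
  by rewrite addrACA addNr addr0.
rewrite -H1 // (Wsum j) // big_ord_recr /= addrC.
by have [_ -> _] := H3 j hj.
Qed.

Lemma sum_tens p q (F : 'I_(p * q) -> C) :
  \sum_(x < p * q) F x = \sum_(i < p) \sum_(j < q) F (mxtens_index (i, j)).
Proof.
rewrite pair_big (reindex (@mxtens_index p q)) /=; last first.
  by exists (@mxtens_unindex p q) => x _; rewrite (mxtens_indexK, mxtens_unindexK).
by apply: eq_bigr => -[i j].
Qed.

Lemma concat_entry p s (u : nat -> 'M[C]_(p, s)) l r (i : 'I_l) c' :
  (\matrix_(r, c) u (mxtens_unindex c).1.+1 r (mxtens_unindex c).2) r (mxtens_index (i, c')) = u i.+1 r c'.
Proof. by rewrite mxE mxtens_indexK. Qed.

Lemma mul_concat_kron p s (u : nat -> 'M[C]_(p, s)) l l' (T : 'M[C]_(l, l')) r j c' :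
  ((\matrix_(r, c) u (mxtens_unindex c).1.+1 r (mxtens_unindex c).2) *m (T *t (1%:M : 'M_s)))
    r (mxtens_index (j, c')) = \sum_(i < l) u i.+1 r c' * T i j.
Proof.
rewrite mxE sum_tens; apply: eq_bigr => i _.
rewrite (bigD1 c') //= big1 => [|c'' /negbTE hc].
  by rewrite addr0 concat_entry tensmxE mxE eqxx mulr1.
by rewrite tensmxE [1%:M _ _]mxE hc mulr0 mulr0.
Qed.

Lemma fft_to k : fft (@to R n3) k = 0.
Proof.
apply/matrixP => i j; rewrite fft_entry big1 ?mxE // => l _.
by rewrite /to /tzero mxE mulr0.
Qed.

Lemma fft_te k : fft (@te R n3) k = 1.
Proof. exact: fft_tid. Qed.

Lemma fft_Htilde (h : nat -> nat -> tube R n3) m k i j :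
  fft (Htilde h m) k i j = if (i <= j.+1)%N then fft (h i.+1 j.+1) k 0 0 else 0.
Proof.
rewrite /Htilde fft_of_tubes mxE; case: ifP => // _.
by rewrite fft_to mxE.
Qed.

Lemma fft_Em m (k : 'I_n3) (j : 'I_m) : fft (@Em R n3 m) k 0 j = if val j == m.-1 then 1 else 0.
Proof.
rewrite /Em fft_of_tubes mxE; case: ifP => _.
  by rewrite fft_te mxE.
by rewrite fft_to mxE.
Qed.


Lemma fft_concat_entry p s (X : nat -> tensor R p s n3) l k r (j : 'I_l) c' :
  fft (tconcat X l) k r (mxtens_index (j, c')) = fft (X j.+1) k r c'.
Proof. by rewrite fft_tconcat (concat_entry (fun x => fft (X x) k)). Qed.

Lemma mul_fft_concat_kron p s (X : nat -> tensor R p s n3) l l' k (T : 'M[C]_(l, l')) r j c' :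
  (fft (tconcat X l) k *m (T *t (1%:M : 'M_s))) r (mxtens_index (j, c'))
    = \sum_(i < l) fft (X i.+1) k r c' * T i j.
Proof. by rewrite fft_tconcat (mul_concat_kron (fun x => fft (X x) k)). Qed.

Lemma mul_cast_kron1 p s l (v : 'M[C]_(p, s)) (M : 'M[C]_(1, l)) r j c' :
  (v *m castmx (mul1n s, erefl (l * s)) (M *t (1%:M : 'M_s))) r (mxtens_index (j, c'))
    = v r c' * M 0 j.
Proof.
rewrite mxE (bigD1 c') //= big1 => [|x /negbTE hx].
  rewrite addr0 castmxE /= cast_ord_id.
  have -> : cast_ord (esym (mul1n s)) c' = mxtens_index (0, c') by apply: val_inj.
  by rewrite tensmxE mxE eqxx mulr1.
rewrite castmxE /= cast_ord_id.
have -> : cast_ord (esym (mul1n s)) x = mxtens_index (0, x) by apply: val_inj.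
by rewrite tensmxE mxE hx mulr0 mulr0.
Qed.

Lemma sum_delta l (F : 'I_l -> C) (i0 : 'I_l) :
  \sum_(x < l) F x * (val i0 == val x)%:R = F i0.
Proof.
rewrite (bigD1 i0) //= eqxx mulr1 big1 ?addr0 // => x hx.
by rewrite eq_sym val_eqE (negbTE hx) mulr0.
Qed.

Lemma main n s m (A : tensor R n n n3) (V0 : tensor R n s n3)
  (V : nat -> tensor R n s n3) (h : nat -> nat -> tube R n3) :
  tubal_global_arnoldi A V0 m V h ->
  let AVm := tconcat (fun j => tprod A (V j)) m in
  let Vm := tconcat V m in
  let Vm1 := tconcat V (m + 1) in
  [/\ AVm = tadd (tprod Vm (tkron (Hm h m) (tid s)))
                 (tprod (V m.+1)
                    (tcastr (mul1n s) (tkron (tprod (h m.+1 m) (Em m)) (tid s)))),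
      tdiamond Vm AVm = Hm h m,
      AVm = tprod Vm1 (tkron (Htilde h m) (tid s)),
      tdiamond Vm1 AVm = Htilde h m &
      tdiamond Vm Vm = tid m].
Proof.
case=> W [hV0 hV1 hW0 hWi hWj] AVm Vm Vm1.
have F k := @arnoldi_fourier n s (fft A k) (fun i => fft (V i) k) (fun j i => fft (W j i) k)
   (fun i j => fft (h i j) k 0 0) m.
have FF k : (forall x y, (1 <= x <= m.+1)%N -> (1 <= y <= m.+1)%N ->
     ip (fft (V x) k) (fft (V y) k) = (x == y)%:R) /\
   (forall j, (1 <= j <= m)%N -> fft A k *m fft (V j) k =
     \sum_(i < j.+1) fft (h i.+1 j) k 0 0 *: fft (V i.+1) k).
  apply: F.
  - by rewrite hV1 fft_normQ ip_norm.
  - by move=> j hj /=; rewrite hW0 // fft_prod.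
  - move=> j i hj hi /=; have [-> ->] := hWi j i hj hi.
    split; first by rewrite fft_tinner mxE eqxx mulr1n.
    by rewrite fft_add fft_opp fft_tscal.
  - move=> j hj /=; have [nz -> ->] := hWj j hj; split.
    + by rewrite fft_normQ ip_norm.
    + by rewrite fft_norma mxE eqxx mulr1n fft_normQ scalerA -realcM mulfV // scale1r.
    + by exists ((frobC (fft (W j j) k))^-1)%:C; rewrite fft_normQ.
have ORTH k x y : (x < m + 1)%N -> (y < m + 1)%N ->
    ip (fft (V x.+1) k) (fft (V y.+1) k) = (x == y)%:R.
  move=> hx hy; have [O _] := FF k.
  rewrite addn1 in hx hy; by rewrite O ?eqSS.
have REL2 k (j : 'I_m) : fft A k *m fft (V j.+1) k =
    \sum_(l < m + 1) fft (Htilde h m) k l j *: fft (V l.+1) k.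
  have [_ RL] := FF k; rewrite RL; last by rewrite /= ltn_ord.
  rewrite (big_ord_widen (m + 1) (fun i => fft (h i.+1 j.+1) k 0 0 *: fft (V i.+1) k)); last by rewrite addn1 !ltnS ltn_ord.
  rewrite big_mkcond /=; apply: eq_bigr => i _; rewrite fft_Htilde ltnS.
  by case: ifP => //; rewrite scale0r.
have AVE k j c' r : fft AVm k r (mxtens_index (j, c')) =
    \sum_(l < m + 1) fft (V l.+1) k r c' * fft (Htilde h m) k l j.
  rewrite /AVm fft_concat_entry fft_prod REL2 summxE; apply: eq_bigr => l _.
  by rewrite mxE mulrC.
have IPA k (i : nat) (j : 'I_m) : (i < m + 1)%N -> ip (fft (V i.+1) k) (fft A k *m fft (V j.+1) k) =
    \sum_(l < m + 1) fft (Htilde h m) k l j * (i == l)%:R.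
  move=> hi; rewrite REL2 ip_sumr; apply: eq_bigr => l _.
  by rewrite ipZr ORTH.
have AVb k (j : 'I_m) : fft (tblock AVm j) k = fft A k *m fft (V j.+1) k.
  by rewrite /AVm fft_tblock_concat fft_prod.
split.
- apply: fft_inj; apply: boolp.funext => k; apply/matrixP => r c.
  case: (mxtens_indexP c) => j c'.
  rewrite AVE fft_add [RHS]mxE fft_prod fft_kron fft_Hm fft_tid mul_fft_concat_kron.
  rewrite fft_prod fft_tcastr fft_kron fft_tid mul_cast_kron1.
  rewrite (@sumr_add _ m 1) big_ord1; congr (_ + _).
    by apply: eq_bigr => i _; rewrite [usubmx _ _ _]mxE.
  rewrite fft_prod mxE big_ord1 fft_Em fft_Htilde /= addn0.
  have jm := ltn_ord j.
  case: eqP => hj.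
    have E : j.+1 = m by lia.
    by rewrite E leqnn mulr1.
  by rewrite ifF ?mulr0 ?mul0r //; apply/negbTE; rewrite -ltnNge; lia.
- apply: fft_inj; apply: boolp.funext => k; apply/matrixP => i j.
  rewrite /tdiamond fft_of_tubes mxE fft_tinner mxE eqxx mulr1n fft_tblock_concat AVb IPA; last by rewrite addn1 ltnW // ltnS ltn_ord.
  rewrite fft_Hm [RHS]mxE.
  rewrite (eq_bigr (fun l : 'I_(m + 1) => fft (Htilde h m) k l j * (val (lshift 1 i) == val l)%:R)) //.
  by rewrite sum_delta.
- apply: fft_inj; apply: boolp.funext => k; apply/matrixP => r c.
  case: (mxtens_indexP c) => j c'.
  rewrite AVE fft_prod fft_kron fft_tid mul_fft_concat_kron.
  by [].
- apply: fft_inj; apply: boolp.funext => k; apply/matrixP => i j.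
  rewrite /tdiamond fft_of_tubes mxE fft_tinner mxE eqxx mulr1n fft_tblock_concat AVb IPA ?ltn_ord //.
  by rewrite sum_delta.
- apply: fft_inj; apply: boolp.funext => k; apply/matrixP => i j.
  rewrite /tdiamond fft_of_tubes mxE fft_tinner mxE eqxx mulr1n !fft_tblock_concat ORTH; last 2 first.
    by rewrite addn1 ltnW // ltnS ltn_ord.
    by rewrite addn1 ltnW // ltnS ltn_ord.
  by rewrite fft_tid mxE.
Qed.

End S.

Close Scope complex_scope.
Close Scope ring_scope.

Theorem proposition7 (R : realType) (n s n3 m : nat)
  (A : tensor R n n n3) (V0 : tensor R n s n3)
  (V : nat -> tensor R n s n3) (h : nat -> nat -> tube R n3) :
  tubal_global_arnoldi A V0 m V h ->
  let AVm := tconcat (fun j => tprod A (V j)) m in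
  let Vm := tconcat V m in
  let Vm1 := tconcat V (m + 1) in
  [/\ AVm = tadd (tprod Vm (tkron (Hm h m) (tid s)))
                 (tprod (V m.+1)
                    (tcastr (mul1n s) (tkron (tprod (h m.+1 m) (Em m)) (tid s)))),
      tdiamond Vm AVm = Hm h m,
      AVm = tprod Vm1 (tkron (Htilde h m) (tid s)),
      tdiamond Vm1 AVm = Htilde h m &
      tdiamond Vm Vm = tid m].
Proof. exact: main. Qed.
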